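(* Let $\{g_i(s),i\in\mathbb{N}_+\}$ be a sequence of rational proper transfer functions, $f(s)$ a rational proper transfer function, and $\{L_n,n\in\mathbb{N}_+\}$ a sequence of real symmetric graph Laplacians with $L_n$ of order $n$ and $L_1=0$. Define $G_n(s)=\mathrm{diag}\{g_1(s),\dots,g_n(s)\}$, $T_n(s)=(I_n+G_n(s)f(s)L_n)^{-1}G_n(s)$ and $\bar g_n(s)=\big(\frac1n\sum_{i=1}^n g_i^{-1}(s)\big)^{-1}$. Suppose $\lambda_2(L_n)\to+\infty$ as $n\to\infty$. Let $S\subset\mathbb{C}$ be compact such that both families $\{g_i^{-1}(s),i\in\mathbb{N}_+\}$ and $\{\bar g_n(s),n\in\mathbb{N}_+\}$ are uniformly bounded on $S$, and $\inf_{s\in S}|f(s)|>0$. Then $$\lim_{n\to\infty}\sup_{s\in S}\Big\|T_n(s)-\frac1n\bar g_n(s)\mathbf{1}\mathbf{1}^\top\Big\|=0.$$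
   Context: A family of complex functions $\{h_i,i\in I\}$ is uniformly bounded on $S$ if there is $M>0$ with $|h_i(s)|\le M$ for all $i\in I$, $s\in S$. $\mathbf{1}$ is the all-ones vector of length $n$, $\|\cdot\|$ the spectral norm. A graph Laplacian is real symmetric positive semidefinite with zero row sums; $\lambda_2$ denotes the second smallest eigenvalue. *)

(* Defs.v *)
From HB Require Import structures.
From mathcomp Require Import all_boot all_order all_algebra.
From mathcomp Require Import all_classical all_reals all_analysis.
From mathcomp Require Import complex.
Set Implicit Arguments. Unset Strict Implicit. Unset Printing Implicit Defensive.
Import Order.TTheory GRing.Theory Num.Theory.
Import numFieldNormedType.Exports.
Local Open Scope classical_set_scope.
Local Open Scope ring_scope.

Section Defs.
Variable R : realType.
Local Notation C := R[i].

Definition ccompact (S : set C) : Prop :=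
  compact ((fun z : C => (complex.Re z, complex.Im z)) @` S : set (R * R)).

Definition cabs (z : C) : R :=
  Num.sqrt (complex.Re z ^+ 2 + complex.Im z ^+ 2).

(* A rational proper transfer function, given by a reduced (coprime)
   representation num/den with den ≠ 0 and deg num ≤ deg den. *)
Definition rat_proper (num den : {poly C}) : Prop :=
  den != 0 /\ coprimep num den /\ (size num <= size den)%N.

Definition rat_eval (num den : {poly C}) (s : C) : C := num.[s] / den.[s].

Definition vnorm n (x : 'cV[C]_n) : R :=
  Num.sqrt (\sum_(i < n) cabs (x i ord0) ^+ 2).

Definition specnorm m n (A : 'M[C]_(m, n)) : R :=
  sup [set vnorm (A *m x) | x in [set x : 'cV[C]_n | vnorm x <= 1]].

Definition laplacian n (L : 'M[R]_n) : Prop :=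
  L^T = L /\
  (forall x : 'cV[R]_n, 0 <= (x^T *m L *m x) ord0 ord0) /\
  L *m (const_mx 1 : 'cV[R]_n) = 0.

Definition sorted_spectrum n (L : 'M[R]_n) (e : seq R) : Prop :=
  sorted <=%R e /\ char_poly L = \prod_(x <- e) ('X - x%:P).

Definition lambda2 n (L : 'M[R]_n) : R :=
  nth 0 (xget [::] (sorted_spectrum L)) 1.

Definition cplx_mx m n (A : 'M[R]_(m, n)) : 'M[C]_(m, n) :=
  map_mx (fun x : R => (x%:C)%C) A.

End Defs.

(* Main.v *)
Require Import Defs.
From HB Require Import structures.
From mathcomp Require Import all_boot all_order all_algebra.
From mathcomp Require Import all_classical all_reals all_analysis.
From mathcomp Require Import complex.
From mathcomp Require Import ring lra.
Import Order.TTheory GRing.Theory Num.Theory.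
Import numFieldNormedType.Exports.
Local Open Scope classical_set_scope.
Local Open Scope ring_scope.
Set Implicit Arguments. Unset Strict Implicit. Unset Printing Implicit Defensive.
Section Part1.
Variable R : realType.
Local Notation C := (R[i]).

Lemma cabsE (z : C) : `|z| = ((cabs z)%:C)%C.
Proof. by rewrite normc_def. Qed.

Lemma cabs_ge0 (z : C) : 0 <= cabs z.
Proof. exact: sqrtr_ge0. Qed.

Lemma cabsM (x y : C) : cabs (x * y) = cabs x * cabs y.
Proof. by apply: (@complexI R); rewrite rmorphM /= -!cabsE normrM. Qed.

Lemma cabsD (x y : C) : cabs (x + y) <= cabs x + cabs y.
Proof. by rewrite -(@lecR R) rmorphD /= -!cabsE ler_normD. Qed.

Lemma cabsN (x : C) : cabs (- x) = cabs x.
Proof. by apply: (@complexI R); rewrite -!cabsE normrN. Qed.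

Lemma cabsB (x y : C) : cabs (x - y) <= cabs x + cabs y.
Proof. by rewrite -(cabsN y) cabsD. Qed.

Lemma cabs_sum (I : finType) (F : I -> C) : cabs (\sum_i F i) <= \sum_i cabs (F i).
Proof.
rewrite -(@lecR R) -cabsE rmorph_sum /=.
by apply: le_trans (ler_norm_sum _ _ _) _; rewrite le_eqVlt; apply/orP; left;
  apply/eqP; apply: eq_bigr => i _; rewrite cabsE.
Qed.

Lemma cabsJ (x : C) : cabs (x^*) = cabs x.
Proof. by apply: (@complexI R); rewrite -!cabsE; exact: normcJ. Qed.

Lemma cabsV (x : C) : cabs (x^-1) = (cabs x)^-1.
Proof. by apply: (@complexI R); rewrite fmorphV /= -!cabsE normfV. Qed.

Lemma cabs_sq (z : C) : (((cabs z) ^+ 2)%:C)%C = z * z^*.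
Proof. by rewrite rmorphXn /= -cabsE normCK. Qed.

Lemma cabs_real (x : R) : cabs ((x%:C)%C) = `|x|.
Proof. by rewrite /cabs /= expr0n /= addr0 sqrtr_sqr. Qed.

Lemma cabs_nat (k : nat) : cabs (k%:R : C) = k%:R.
Proof.
have -> : (k%:R : C) = ((k%:R : R)%:C)%C by rewrite rmorph_nat.
by rewrite cabs_real ger0_norm.
Qed.

Lemma cabs0 : cabs (0 : C) = 0.
Proof. exact: (cabs_nat 0). Qed.

Lemma cabs_eq0 (z : C) : (cabs z == 0) = (z == 0).
Proof. by rewrite -[z == 0]normr_eq0 cabsE -[0 : C]/((0 : R)%:C)%C (inj_eq (@complexI R)). Qed.
End Part1.
Section Part2.
Variable R : realType.

Lemma sum_prod_le n (u v : 'I_n -> R) :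
  (\sum_i u i) * (\sum_j v j) <=
  n%:R / 2 * (\sum_i u i ^+ 2 + \sum_j v j ^+ 2).
Proof.
rewrite mulr_suml.
apply: (@le_trans _ _ (\sum_i \sum_j ((u i ^+ 2) / 2 + (v j ^+ 2) / 2))).
  apply: ler_sum => i _; rewrite mulr_sumr; apply: ler_sum => j _.
  have := sqr_ge0 (u i - v j); rewrite !expr2 => h; lra.
rewrite (eq_bigr (fun i => n%:R * (u i ^+ 2 / 2) + (\sum_j v j ^+ 2) / 2)); last first.
  move=> i _; rewrite big_split /= sumr_const card_ord mulr_natl mulr_suml //.
rewrite big_split /= -mulr_sumr -mulr_suml sumr_const card_ord -mulr_natl.
set A := \sum_i _; set B := \sum_i _; lra.
Qed.

Lemma sum_sq_le n (u : 'I_n -> R) :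
  (\sum_i u i) ^+ 2 <= n%:R * \sum_i u i ^+ 2.
Proof. have h := sum_prod_le u u; rewrite expr2; lra. Qed.
End Part2.
Section Arith.
Variable R : realType.

Lemma arith_beta (N ni b M1 M2 sY nsy : R) : 0 < N -> N * ni = 1 ->
  0 <= b -> b <= ni * M2 * (M1 * sY) -> 0 <= M1 -> 0 <= M2 -> 0 <= sY ->
  sY ^+ 2 <= N * nsy -> N * b ^+ 2 <= M1 ^+ 2 * M2 ^+ 2 * nsy.
Proof.
move=> N0 Nni b0 hb M10 M20 sY0 hs.
have hNb : N * b <= M2 * M1 * sY.
  have := ler_wpM2l (ltW N0) hb.
  by rewrite !mulrA Nni mul1r.
have h0 : 0 <= N * b by rewrite mulr_ge0 // ltW.
have h3 : (N * b) ^+ 2 <= (M2 * M1 * sY) ^+ 2 by rewrite !expr2; nra.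
have h4 : N * (N * b ^+ 2) <= N * (M1 ^+ 2 * M2 ^+ 2 * nsy).
  apply: (le_trans (y := (M2 * M1 * sY) ^+ 2)).
    by move: h3; rewrite exprMn expr2 mulrA.
  have := ler_wpM2l (mulr_ge0 (exprn_ge0 2 M10) (exprn_ge0 2 M20)) hs.
  by rewrite !exprMn; lra.
by rewrite ler_pM2l in h4.
Qed.

Lemma arith_main (N ni c lam nsy nsw P A M1 M2 sY sW : R) : 0 < N -> N * ni = 1 ->
  0 <= M1 -> 0 <= M2 -> 0 <= sY -> 0 <= sW -> 0 <= A ->
  c * lam * nsy <= P + M1 * nsy + A * (M1 * sY) ->
  P <= (nsy + nsw) / 2 ->
  A <= (sW + M1 * sY) * ni * M2 ->
  sW * sY <= N / 2 * (nsw + nsy) ->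
  sY ^+ 2 <= N * nsy ->
  (c * lam - (2^-1 + M1 + M1 * M2 / 2 + M1 ^+ 2 * M2)) * nsy <= (2^-1 + M1 * M2 / 2) * nsw.
Proof.
move=> N0 Nni M10 M20 sY0 sW0 A0 h1 hP hA hWY hY.
have hAN : A * N <= (sW + M1 * sY) * M2.
  have := ler_wpM2r (ltW N0) hA.
  have -> : (sW + M1 * sY) * ni * M2 * N = (sW + M1 * sY) * M2 * (N * ni) by ring.
  by rewrite Nni mulr1.
have h2 : N * (A * (M1 * sY)) <= N * (M1 * M2 * ((nsw + nsy) / 2 + M1 * nsy)).
  have e : N * (A * (M1 * sY)) = (A * N) * (M1 * sY) by ring.
  rewrite e; apply: le_trans (ler_wpM2r (mulr_ge0 M10 sY0) hAN) _.
  have := ler_wpM2l (mulr_ge0 M10 M20) hWY.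
  have := ler_wpM2l (mulr_ge0 (mulr_ge0 M10 M10) M20) hY.
  rewrite expr2; lra.
rewrite ler_pM2l // in h2.
lra.
Qed.

Lemma arith_final (k nr nsy nsw K2 K3 : R) : 0 <= nr -> 0 <= nsw -> 0 <= K2 -> 0 <= K3 ->
  nr <= K3 * nsy -> k * nsy <= K2 * nsw -> k * nr <= K3 * K2 * nsw.
Proof.
move=> nr0 nsw0 K20 K30 h1 h2.
case: (lerP 0 k) => k0.
  apply: (le_trans (ler_wpM2l k0 h1)).
  have := ler_wpM2l K30 h2; lra.
have : k * nr <= 0 by nra.
have : 0 <= K3 * K2 * nsw by rewrite !mulr_ge0.
lra.
Qed.
End Arith.
Section Key.
Variable R : realType.
Local Notation C := (R[i]).

Definition ns n (x : 'cV[C]_n) : R := \sum_i cabs (x i ord0) ^+ 2.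
Arguments ns {n} x.

Lemma ns_ge0 n (x : 'cV[C]_n) : 0 <= ns x.
Proof. by apply: sumr_ge0 => i _; apply: sqr_ge0. Qed.

Lemma key n (d : 'I_n -> C) (f : C) (Lc : 'M[C]_n) (lam M1 M2 c : R) :
  (0 < n)%N ->
  Lc *m (const_mx 1 : 'cV[C]_n) = 0 ->
  (forall x : 'cV[C]_n, \sum_i (Lc *m x) i ord0 = 0) ->
  (forall y : 'cV[C]_n, \sum_i y i ord0 = 0 ->
     lam * ns y <= cabs (\sum_i (y i ord0)^* * (Lc *m y) i ord0)) ->
  (forall i, cabs (d i) <= M1) -> 0 <= M1 ->
  (n%:R^-1 * \sum_i d i) != 0 -> cabs ((n%:R^-1 * \sum_i d i)^-1) <= M2 ->
  0 <= M2 -> 0 < c -> c <= cabs f -> 0 <= lam ->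
  forall x : 'cV[C]_n,
  (c * lam - (2^-1 + M1 + M1 * M2 / 2 + M1 ^+ 2 * M2)) *
    ns (x - (n%:R^-1 * (n%:R^-1 * \sum_i d i)^-1 *
       \sum_i (diag_mx (\row_i d i) *m x + f *: (Lc *m x)) i ord0) *: const_mx 1)
  <= (2 + 2 * M1 ^+ 2 * M2 ^+ 2) * (2^-1 + M1 * M2 / 2) *
     ns (diag_mx (\row_i d i) *m x + f *: (Lc *m x)).
Proof.
move=> n0 hone hcol hquad hd M10 hm0 hm M20 c0 hc lam0 x.
set m := n%:R^-1 * \sum_i d i.
set w := diag_mx _ *m x + _.
have nC0 : (n%:R : C) != 0 by rewrite pnatr_eq0 -lt0n.
have nR0 : (0 : R) < n%:R by rewrite ltr0n.
set a := n%:R^-1 * \sum_i x i ord0.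
set y := x - a *: (const_mx 1 : 'cV[C]_n).
have F1 i : y i ord0 = x i ord0 - a by rewrite !mxE mulr1.
have F2 : \sum_i y i ord0 = 0.
  under eq_bigr do rewrite F1.
  by rewrite sumrB sumr_const card_ord -mulr_natl /a mulrA mulfV // mul1r subrr.
have F3 : Lc *m y = Lc *m x by rewrite mulmxBr -scalemxAr hone scaler0 subr0.
have F4 i : w i ord0 = d i * x i ord0 + f * (Lc *m x) i ord0.
  by rewrite /w mul_diag_mx !mxE.
have nm : n%:R * m = \sum_i d i by rewrite /m mulrA mulfV // mul1r.
have F5 : \sum_i w i ord0 = \sum_i d i * y i ord0 + a * (n%:R * m).
  under eq_bigr do rewrite F4.
  rewrite big_split /= -mulr_sumr hcol mulr0 addr0 nm mulr_sumr -big_split /=.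
  by apply: eq_bigr => i _; rewrite F1; ring.
set D := \sum_i d i * y i ord0.
have F6 i : (x - (n%:R^-1 * m^-1 * \sum_j w j ord0) *: const_mx 1) i ord0
    = y i ord0 - n%:R^-1 * m^-1 * D.
  rewrite !mxE F5 /a -/D.
  move: (x i ord0) (\sum_j x j ord0) => X Sx.
  field; rewrite nC0 hm0 //.
set Y := fun i => cabs (y i ord0).
set W := fun i => cabs (w i ord0).
have Y0 i : 0 <= Y i by apply: cabs_ge0.
have W0 i : 0 <= W i by apply: cabs_ge0.
have sY0 : 0 <= \sum_i Y i by apply: sumr_ge0.
have sW0 : 0 <= \sum_i W i by apply: sumr_ge0.
have hD : cabs D <= M1 * \sum_i Y i.
  apply: le_trans (cabs_sum _) _; rewrite mulr_sumr; apply: ler_sum => i _.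
  by rewrite cabsM; apply: ler_wpM2r; [exact: cabs_ge0 | exact: hd].
have cn : cabs (n%:R^-1 : C) = n%:R^-1 by rewrite cabsV cabs_nat.
have Nni : (n%:R : R) * n%:R^-1 = 1 by rewrite mulfV // gt_eqF.
have hb : cabs (n%:R^-1 * m^-1 * D) <= n%:R^-1 * M2 * (M1 * \sum_i Y i).
  rewrite !cabsM cn; apply: ler_pM; rewrite ?mulr_ge0 ?cabs_ge0 ?invr_ge0 ?ler0n //.
  by apply: ler_wpM2l; rewrite ?invr_ge0 ?ler0n.
have hY : (\sum_i Y i) ^+ 2 <= n%:R * ns y by apply: sum_sq_le.
have hr : ns (x - (n%:R^-1 * m^-1 * \sum_i w i ord0) *: const_mx 1)
    <= (2 + 2 * M1 ^+ 2 * M2 ^+ 2) * ns y.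
  rewrite /ns; under eq_bigr do rewrite F6.
  apply: (le_trans (y := \sum_(i < n) (2 * Y i ^+ 2 + 2 * cabs (n%:R^-1 * m^-1 * D) ^+ 2))).
    apply: ler_sum => i _.
    move: (Y0 i) (cabs_ge0 (n%:R^-1 * m^-1 * D)) (cabs_ge0 (y i ord0 - n%:R^-1 * m^-1 * D)).
    move: (cabsB (y i ord0) (n%:R^-1 * m^-1 * D)); rewrite /Y.
    move: (cabs (y i ord0)) (cabs (n%:R^-1 * m^-1 * D)) (cabs (y i ord0 - n%:R^-1 * m^-1 * D)).
    move=> z u v h z0 u0 v0; rewrite !expr2.
    have h2 : v * v <= (z + u) * (z + u) by apply: ler_pM.
    have e1 : (z + u) * (z + u) = z * z + 2 * (z * u) + u * u by ring.
    have e2 : 0 <= (z - u) * (z - u) by rewrite -expr2 sqr_ge0.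
    have e3 : (z - u) * (z - u) = z * z - 2 * (z * u) + u * u by ring.
    lra.
  rewrite big_split /= -!mulr_sumr sumr_const card_ord -mulr_natl.
  have := arith_beta nR0 Nni (cabs_ge0 _) hb M10 M20 sY0 hY.
  rewrite /ns /Y; lra.
have F1' i : x i ord0 = y i ord0 + a by rewrite F1 subrK.
set q := \sum_i (y i ord0)^* * (Lc *m y) i ord0.
have E : \sum_i (y i ord0)^* * w i ord0 = \sum_i (y i ord0)^* * d i * y i ord0
    + a * \sum_i (y i ord0)^* * d i + f * q.
  rewrite /q F3 !mulr_sumr -!big_split /=; apply: eq_bigr => i _.
  by rewrite F4 F1'; ring.
have Q : f * q = \sum_i (y i ord0)^* * w i ord0 - \sum_i (y i ord0)^* * d i * y i ord0
    - a * \sum_i (y i ord0)^* * d i by rewrite E; ring.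
have hq : lam * ns y <= cabs q by apply: hquad.
have h1 : c * lam * ns y <= cabs (f * q).
  rewrite cabsM -mulrA; apply: ler_pM => //; [exact: ltW | ].
  by rewrite mulr_ge0 // ns_ge0.
have h2 : cabs (f * q) <= \sum_i Y i * W i + M1 * ns y + cabs a * (M1 * \sum_i Y i).
  rewrite Q.
  apply: le_trans (cabsB _ _) _; apply: le_trans (lerD (cabsB _ _) (lexx _)) _.
  apply: lerD; first apply: lerD.
  - apply: le_trans (cabs_sum _) _; apply: ler_sum => i _.
    by rewrite cabsM cabsJ.
  - apply: le_trans (cabs_sum _) _; rewrite /ns mulr_sumr; apply: ler_sum => i _.
    rewrite !cabsM cabsJ expr2 [cabs (y i ord0) * _]mulrC -mulrA.
    by apply: ler_wpM2r; [rewrite mulr_ge0 ?cabs_ge0 | exact: hd].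
  - rewrite cabsM; apply: ler_wpM2l; first exact: cabs_ge0.
    apply: le_trans (cabs_sum _) _; rewrite mulr_sumr; apply: ler_sum => i _.
    rewrite cabsM cabsJ mulrC; apply: ler_wpM2r; [exact: cabs_ge0 | exact: hd].
have hP : \sum_i Y i * W i <= (ns y + ns w) / 2.
  rewrite /ns -big_split /= mulr_suml; apply: ler_sum => i _.
  move: (Y0 i) (W0 i); rewrite /Y /W; move: (cabs (y i ord0)) (cabs (w i ord0)) => u v u0 v0.
  have e2 : 0 <= (u - v) * (u - v) by rewrite -expr2 sqr_ge0.
  have e3 : (u - v) * (u - v) = u * u - 2 * (u * v) + v * v by ring.
  rewrite !expr2; lra.
have Ea : a = (\sum_i w i ord0 - D) * n%:R^-1 * m^-1.
  rewrite F5 addrAC subrr add0r; field; rewrite nC0 hm0 //.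
have hA : cabs a <= (\sum_i W i + M1 * \sum_i Y i) * n%:R^-1 * M2.
  rewrite {1}Ea !cabsM cn; apply: ler_pM; rewrite ?mulr_ge0 ?cabs_ge0 ?invr_ge0 ?ler0n //.
  apply: ler_wpM2r; rewrite ?invr_ge0 ?ler0n //.
  apply: le_trans (cabsB _ _) _; apply: lerD => //; exact: cabs_sum.
have hWY : (\sum_i W i) * (\sum_i Y i) <= n%:R / 2 * (ns w + ns y).
  exact: sum_prod_le.
have hmain := arith_main nR0 Nni M10 M20 sY0 sW0 (cabs_ge0 a) (le_trans h1 h2) hP hA hWY hY.
apply: arith_final hr hmain; rewrite ?ns_ge0 //.
  by rewrite addr_ge0 ?mulr_ge0 ?invr_ge0 ?ler0n.
by rewrite addr_ge0 ?mulr_ge0 ?exprn_ge0.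
Qed.
End Key.
Section CharConj.
Variable F : fieldType.

Lemma char_poly_conj n (P D : 'M[F]_n) : P \in unitmx ->
  char_poly (invmx P *m D *m P) = char_poly D.
Proof.
move=> Pu.
set iPc := map_mx (@polyC F) (invmx P); set Pc := map_mx (@polyC F) P.
have h1 : iPc *m Pc = 1%:M by rewrite -map_mxM mulVmx // map_mx1.
have hX : iPc *m ('X%:M) *m Pc = 'X%:M.
  by rewrite scalar_mxC -mulmxA h1 mulmx1.
have hC : char_poly_mx (invmx P *m D *m P) = iPc *m char_poly_mx D *m Pc.
  by rewrite /char_poly_mx mulmxBr mulmxBl hX !map_mxM.
have hd : \det iPc * \det Pc = 1 by rewrite -det_mulmx h1 det1.
by rewrite /char_poly hC !det_mulmx mulrAC hd mul1r.
Qed.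
End CharConj.
Section Spec.
Variable R : realType.
Local Notation C := (R[i]).
Local Open Scope sesquilinear_scope.

Lemma dotE n (u v : 'cV[C]_n) :
  \sum_i (u i ord0)^* * v i ord0 = ((u ^t Num.conj) *m v) ord0 ord0.
Proof. by rewrite !mxE; apply: eq_bigr => i _; rewrite !mxE. Qed.

Lemma nsE n (u : 'cV[C]_n) : ((ns u)%:C)%C = ((u ^t Num.conj) *m u) ord0 ord0.
Proof.
rewrite -dotE /ns rmorph_sum /=; apply: eq_bigr => i _.
by rewrite cabs_sq mulrC.
Qed.

Lemma count_card n (p : pred 'I_n) : count p (enum 'I_n) = #|p|.
Proof.
rewrite cardE /enum_mem size_filter count_filter; apply: eq_count => x.
by rewrite /= andbT.
Qed.

Lemma count_lt_nth1 (e : seq R) : sorted <=%R e -> 0 < nth 0 e 1 ->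
  (count (fun x : R => (x < nth 0 e 1)%R) e <= 1)%N.
Proof.
case: e => [|e0 [|e1 rest]] //=; try by rewrite ltxx.
move=> /andP[_ pth] _.
have := order_path_min (@le_trans _ R) pth.
move=> /allP hall.
rewrite ltxx add0n (@eq_in_count _ _ pred0); first by rewrite count_pred0 addn0 leq_b1.
by move=> x /hall /= h; rewrite ltNge h.
Qed.

Lemma spec_bound n (L : 'M[R]_n) (e : seq R) :
  L^T = L -> L *m (const_mx 1 : 'cV_n) = 0 -> sorted_spectrum L e -> 0 < nth 0 e 1 ->
  forall y : 'cV[C]_n, \sum_i y i ord0 = 0 ->
  nth 0 e 1 * ns y <= cabs (\sum_i (y i ord0)^* * (cplx_mx L *m y) i ord0).
Proof.
move=> Lsym L1 [se cp] lam0 y sy.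
set lam := nth 0 e 1.
set Lc := cplx_mx L.
have LcH : Lc ^t Num.conj = Lc.
  apply/matrixP => i j; rewrite !mxE.
  have -> : L j i = L i j by rewrite -{1}Lsym mxE.
  by rewrite conj_Creal // complex_real.
have Lcn : Lc \is normalmx by apply/normalmxP; rewrite LcH.
have /orthomx_spectralP LcE := Lcn.
set P := spectralmx Lc in LcE; set sp := spectral_diag Lc in LcE.
have Pu : P \is unitarymx := spectral_unitarymx Lc.
have PU : P \in unitmx := spectral_unit Lc.
have iP : invmx P = P ^t Num.conj by apply: invmx_unitary.
have PPt : P *m P ^t Num.conj = 1%:M by apply/unitarymxP.
have PtP : P ^t Num.conj *m P = 1%:M by rewrite -iP mulVmx.
have cpc : char_poly Lc = \prod_(x <- map (real_complex R) e) ('X - x%:P).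
  rewrite /Lc /cplx_mx -map_char_poly cp map_prod_XsubC big_map //.
have cpd : char_poly Lc = \prod_(x <- [seq sp 0 k | k <- enum 'I_n]) ('X - x%:P).
  rewrite {1}LcE char_poly_conj // char_poly_trig ?diag_mx_is_trig //.
  rewrite big_map big_enum /=; apply: eq_bigr => k _; rewrite mxE eqxx mulr1n //.
have ps : perm_eq [seq sp 0 k | k <- enum 'I_n] (map (real_complex R) e).
  by apply: prod_XsubC_eq; rewrite -cpc -cpd.
set r := fun k => complex.Re (sp 0 k).
have hr k : sp 0 k = ((r k)%:C)%C.
  have : sp 0 k \in map (real_complex R) e.
    by rewrite -(perm_mem ps); apply: map_f; rewrite mem_enum.
  by case/mapP => x _ E; rewrite /r E.
have psr : perm_eq [seq r k | k <- enum 'I_n] e.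
  have := perm_map (@complex.Re R) ps; rewrite -!map_comp.
  move=> h; apply: (perm_trans h); rewrite map_id_in //.
have cnt := count_lt_nth1 se lam0.
have card1 : (#|[pred k | (r k < lam)%R]| <= 1)%N.
  by rewrite -count_card -(count_map r (fun x : R => (x < lam)%R)) (permP psr).
set z := P *m y.
have Lc1 : Lc *m (const_mx 1 : 'cV[C]_n) = 0.
  have -> : (const_mx 1 : 'cV[C]_n) = map_mx (real_complex R) (const_mx 1).
    by apply/matrixP => i j; rewrite !mxE.
  by rewrite /Lc /cplx_mx -map_mxM L1 map_mx0.
have PLc : P *m Lc = diag_mx sp *m P by rewrite {1}LcE iP !mulmxA PPt mul1mx.
set z1 := P *m (const_mx 1 : 'cV[C]_n).
have dz1 : diag_mx sp *m z1 = 0 by rewrite /z1 mulmxA -PLc -mulmxA Lc1 mulmx0.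
have dz1k k : sp 0 k * z1 k ord0 = 0.
  by move/matrixP/(_ k ord0): dz1; rewrite mul_diag_mx !mxE.
have inner : \sum_k (z k ord0)^* * z1 k ord0 = 0.
  rewrite dotE /z /z1 trmx_mul map_mxM -mulmxA [P ^t Num.conj *m (P *m _)]mulmxA PtP mul1mx.
  rewrite -dotE; under eq_bigr do rewrite mxE mulr1.
  by rewrite -rmorph_sum sy rmorph0.
have zk k : r k < lam -> z k ord0 = 0.
  move=> hk.
  have oth j : j != k -> z1 j ord0 = 0.
    move=> jk.
    have hj : ~~ (r j < lam).
      apply/negP => hj.
      have := (card_le1P card1) k hk j; rewrite !inE hj => /esym /eqP ejk.
      by rewrite ejk eqxx in jk.
    have spj : sp 0 j != 0.
      rewrite hr -[0 : C]/((0 : R)%:C)%C (inj_eq (@complexI R)).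
      by rewrite -leNgt in hj; apply: lt0r_neq0; apply: lt_le_trans hj.
    by have /eqP := dz1k j; rewrite mulf_eq0 (negbTE spj) /= => /eqP.
  have hk0 : (z k ord0)^* * z1 k ord0 = 0.
    rewrite -inner (bigD1 k) //= big1 ?addr0 // => j jk.
    by rewrite oth ?mulr0.
  have z1k : z1 k ord0 != 0.
    apply/negP => /eqP h0.
    have z10 : z1 = 0.
      apply/matrixP => i j; rewrite ord1.
      by case: (eqVneq i k) => [->|/oth ->]; rewrite ?h0 mxE.
    have : (const_mx 1 : 'cV[C]_n) = 0.
      by rewrite -[const_mx 1]mul1mx -PtP -mulmxA -/z1 z10 mulmx0.
    by move/matrixP/(_ k ord0); rewrite !mxE; apply/eqP; exact: oner_neq0.
  by move/eqP: hk0; rewrite mulf_eq0 (negbTE z1k) orbF conjC_eq0 => /eqP.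
have qE : \sum_i (y i ord0)^* * (Lc *m y) i ord0
    = \sum_k (z k ord0)^* * (sp 0 k * z k ord0).
  apply: (@etrans _ _ (((z ^t Num.conj) *m (diag_mx sp *m z)) ord0 ord0)).
    by rewrite dotE /z {1}LcE iP trmx_mul map_mxM !mulmxA; reflexivity.
  by rewrite -dotE; apply: eq_bigr => k _; rewrite mul_diag_mx [X in _ * X = _]mxE.
have nz : ns z = ns y.
  apply: (@complexI R); rewrite !nsE /z trmx_mul map_mxM -mulmxA.
  by rewrite [P ^t Num.conj *m (P *m _)]mulmxA PtP mul1mx.
rewrite qE.
have term k : (z k ord0)^* * (sp 0 k * z k ord0) = ((r k * cabs (z k ord0) ^+ 2)%:C)%C.
  by rewrite hr rmorphM /= cabs_sq; ring.
under eq_bigr do rewrite term.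
rewrite -rmorph_sum cabs_real.
apply: le_trans (ler_norm _).
rewrite -nz /ns mulr_sumr; apply: ler_sum => k _.
case: (ltP (r k) lam) => h.
  by rewrite zk // cabs0 expr0n /= !mulr0.
by apply: ler_wpM2r => //; apply: exprn_ge0; apply: cabs_ge0.
Qed.
End Spec.
Section Final.
Variable R : realType.
Local Notation C := (R[i]).

Lemma cplx_one n (L : 'M[R]_n) : L *m (const_mx 1 : 'cV_n) = 0 ->
  cplx_mx L *m (const_mx 1 : 'cV[C]_n) = 0.
Proof.
move=> L1.
have -> : (const_mx 1 : 'cV[C]_n) = map_mx (real_complex R) (const_mx 1).
  by apply/matrixP => i j; rewrite !mxE.
by rewrite /cplx_mx -map_mxM L1 map_mx0.
Qed.

Lemma cplx_col n (L : 'M[R]_n) : L^T = L -> L *m (const_mx 1 : 'cV_n) = 0 ->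
  forall x : 'cV[C]_n, \sum_i (cplx_mx L *m x) i ord0 = 0.
Proof.
move=> Ls L1 x.
have h1 := cplx_one L1.
have e : \sum_i (cplx_mx L *m x) i ord0 = \sum_j (\sum_i cplx_mx L j i) * x j ord0.
  under eq_bigr do rewrite mxE.
  rewrite exchange_big /=; apply: eq_bigr => j _; rewrite mulr_suml.
  apply: eq_bigr => i _; rewrite !mxE.
  have -> : L i j = L j i by rewrite -{1}Ls mxE.
  by [].
rewrite e big1 // => j _.
have : \sum_i cplx_mx L j i = 0.
  move/matrixP/(_ j ord0): h1; rewrite mxE [RHS]mxE => h; apply: (etrans _ h).
  by apply: eq_bigr => i _; rewrite [X in _ = _ * X]mxE mulr1.
by move=> ->; rewrite mul0r.
Qed.

Lemma ns_eq0 n (x : 'cV[C]_n) : ns x = 0 -> x = 0.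
Proof.
move=> /eqP; rewrite psumr_eq0; last by move=> i _; apply: sqr_ge0.
move=> /allP h; apply/matrixP => i j; rewrite ord1 mxE.
have := h i (mem_index_enum _); rewrite /= sqrf_eq0 cabs_eq0 => /eqP //.
Qed.

Lemma arith_end (k K e2 nr nx : R) : 0 < K -> 0 < e2 -> K / e2 <= k ->
  0 <= nr -> nx <= 1 -> k * nr <= K * nx -> nr <= e2.
Proof.
move=> K0 e20 hk nr0 nx1 h.
have h1 : K / e2 * nr <= K.
  apply: le_trans (ler_wpM2r nr0 hk) _; apply: le_trans h _.
  by rewrite -[X in _ <= X]mulr1 ler_wpM2l // ltW.
have h2 : K * nr <= K * e2.
  have := ler_wpM2r (ltW e20) h1.
  have -> : K / e2 * nr * e2 = K * nr by field; rewrite gt_eqF.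
  by rewrite mulrC.
by rewrite ler_pM2l in h2.
Qed.
End Final.

Unset Implicit Arguments.

Theorem theorem6 (R : realType)
    (gn gd : nat -> {poly R[i]}) (fn fd : {poly R[i]})
    (L : forall n : nat, 'M[R]_n) (S : set R[i]) :
  (forall i, rat_proper (gn i) (gd i)) ->
  rat_proper fn fd ->
  (forall n, laplacian (L n)) ->
  L 1%N = 0 ->
  (forall M : R, exists N : nat, forall n : nat, (N <= n)%N -> M <= lambda2 (L n)) ->
  ccompact S ->
  (exists M : R, 0 < M /\ forall i s, S s ->
      (gn i).[s] != 0 /\ cabs (rat_eval (gd i) (gn i) s) <= M) ->
  (exists M : R, 0 < M /\ forall n s, (0 < n)%N -> S s ->
      let m := (n%:R)^-1 * \sum_(i < n) rat_eval (gd i) (gn i) s in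
      m != 0 /\ cabs m^-1 <= M) ->
  (exists c : R, 0 < c /\ forall s, S s -> c <= cabs (rat_eval fn fd s)) ->
  forall eps : R, 0 < eps -> exists N : nat, forall n : nat, (N <= n)%N ->
    forall s, S s ->
      let Ginv := diag_mx (\row_(i < n) rat_eval (gd i) (gn i) s) in
      let T := invmx (Ginv + rat_eval fn fd s *: cplx_mx (L n)) in
      let gbar := ((n%:R)^-1 * \sum_(i < n) rat_eval (gd i) (gn i) s)^-1 in
      specnorm (T - ((n%:R)^-1 * gbar) *: const_mx 1) <= eps.
Proof.
move=> _ _ HL _ Hlam _ [M1 [M10 HM1]] [M2 [M20 HM2]] [c [c0 Hc]] eps eps0.
set K1 := 2^-1 + M1 + M1 * M2 / 2 + M1 ^+ 2 * M2.
set K := (2 + 2 * M1 ^+ 2 * M2 ^+ 2) * (2^-1 + M1 * M2 / 2).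
have K0 : 0 < K.
  by rewrite /K mulr_gt0 // ?ltr_pwDl ?ltr_pwDr ?mulr_ge0 ?exprn_ge0 ?ltW ?invr_gt0.
have e20 : 0 < eps ^+ 2 by rewrite exprn_gt0.
set Lam := (K / eps ^+ 2 + K1) / c + 1.
have [N HN] := Hlam Lam.
exists (maxn N 1) => n hn s Ss /=.
have n0 : (0 < n)%N by apply: leq_trans hn; rewrite leq_maxr.
have hlam := HN n (leq_trans (leq_maxl _ _) hn).
have K1_0 : 0 <= K1 by rewrite /K1 !addr_ge0 ?mulr_ge0 ?invr_ge0 ?exprn_ge0 ?ltW.
have Lam0 : 0 < Lam.
  have : 0 <= (K / eps ^+ 2 + K1) / c.
    apply: divr_ge0; last exact: ltW.
    by apply: addr_ge0 => //; apply: divr_ge0; apply: ltW.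
  rewrite /Lam; lra.
set lam := lambda2 (L n) in hlam.
have lam0 : 0 < lam by apply: lt_le_trans hlam.
have [Ls [_ L1]] := HL n.
have [e He elam] : exists2 e, sorted_spectrum (L n) e & lam = nth 0 e 1.
  move: lam0; rewrite /lam /lambda2; case: xgetP => [e _ He|_] h.
    by exists e.
  by rewrite /= ltxx in h.
set d := fun i : 'I_n => rat_eval (gd i) (gn i) s.
set f := rat_eval fn fd s.
set Lc := cplx_mx (L n).
have := HM2 n s n0 Ss; rewrite /= => -[hm0 hm].
have hd : forall i : 'I_n, cabs (d i) <= M1 by move=> i; exact: (HM1 i s Ss).2.
have hc := Hc s Ss.
have hquad := spec_bound Ls L1 He.
rewrite -elam in hquad; have {}hquad := hquad lam0.
have hkey := key (d := d) (f := f) n0 (cplx_one L1) (cplx_col Ls L1) hquad hd (ltW M10)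
  hm0 hm (ltW M20) c0 hc (ltW lam0).
rewrite -/K1 -/K in hkey.
have hklam : K / eps ^+ 2 <= c * lam - K1.
  have eL : c * Lam = K / eps ^+ 2 + K1 + c.
    have cn0 : c != 0 by rewrite gt_eqF.
    by rewrite /Lam; field; rewrite cn0 gt_eqF.
  have := ler_wpM2l (ltW c0) hlam; rewrite eL; lra.
have kpos : 0 < c * lam - K1 by apply: lt_le_trans hklam; rewrite divr_gt0.
set A := diag_mx (\row_i d i) + f *: Lc.
have hw x : diag_mx (\row_i d i) *m x + f *: (Lc *m x) = A *m x.
  by rewrite mulmxDl scalemxAl.
have ns0 : ns (0 : 'cV[R[i]]_n) = 0.
  by rewrite /ns big1 // => i _; rewrite mxE cabs0 expr0n.
have Au : A \in unitmx.
  rewrite unitmxE unitfE; apply/negP => hdet.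
  have : \det A^T == 0 by rewrite det_tr.
  case/det0P => v v0 vA.
  have Av : A *m v^T = 0 by rewrite -[A]trmxK -trmx_mul vA trmx0.
  have := hkey v^T; rewrite hw Av.
  have -> : \sum_i (0 : 'cV[R[i]]_n) i ord0 = 0 by rewrite big1 // => i _; rewrite mxE.
  rewrite mulr0 scale0r subr0 ns0 mulr0 => h.
  have : ns v^T = 0.
    apply/eqP; rewrite eq_le ns_ge0 andbT.
    by rewrite -(pmulr_rle0 _ kpos).
  move/ns_eq0 => /(congr1 trmx); rewrite trmxK trmx0 => v00.
  by rewrite v00 eqxx in v0.
rewrite -/A /specnorm; apply: ge_sup.
  exists (vnorm ((invmx A - (n%:R^-1 * (n%:R^-1 * \sum_(i < n) d i)^-1) *: const_mx 1) *m 0)).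
  exists 0 => //=.
  by rewrite /vnorm -/(ns 0) ns0 sqrtr0 ler01.
move=> _ [x hx <-].
have nx1 : ns x <= 1.
  move: hx; rewrite /= /vnorm -/(ns x) => hx.
  rewrite -(sqr_sqrtr (ns_ge0 x)); apply: exprn_ile1 => //; exact: sqrtr_ge0.
set u := invmx A *m x.
have hAu : A *m u = x by rewrite /u mulKVmx.
have c1 : (const_mx 1 : 'M[R[i]]_n) *m x = (\sum_i x i ord0) *: const_mx 1.
  apply/matrixP => i j; rewrite !mxE mulr1; apply: eq_bigr => k _; rewrite mxE mul1r.
  by rewrite ord1.
have Bx : (invmx A - (n%:R^-1 * (n%:R^-1 * \sum_(i < n) d i)^-1) *: const_mx 1) *m x
   = u - (n%:R^-1 * (n%:R^-1 * \sum_i d i)^-1 * \sum_i (A *m u) i ord0) *: const_mx 1.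
  by rewrite hAu mulmxBl -scalemxAl c1 scalerA.
have := hkey u; rewrite hw -Bx hAu => hk.
have hnr := arith_end K0 e20 hklam (ns_ge0 _) nx1 hk.
rewrite /vnorm -/(ns _).
apply: le_trans (ler_wsqrtr hnr) _.
by rewrite sqrtr_sqr ger0_norm // ltW.
Qed.
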